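(* Let $\mathcal{P}$ be a polyomino and $I_{\mathcal{P}}\subset S=\mathbb{K}[x_v\mid v\in V(\mathcal{P})]$ its polyomino ideal over a field $\mathbb{K}$. If there exists a zig-zag walk in $\mathcal{P}$, then $I_{\mathcal{P}}$ is not prime.
   Context: For $a\in\mathbb{N}^2$ the cell $[a,a+(1,1)]$ has vertices $a,a+(1,0),a+(0,1),a+(1,1)$ and four edges. A polyomino $\mathcal{P}$ is a finite nonempty set of cells such that any two cells are joined by a sequence of cells of $\mathcal{P}$, consecutive ones sharing an edge. $V(\mathcal{P})$ is the union of the vertex sets of its cells. For $a=(i,j)$, $b=(k,\ell)$ with $i<k$, $j<\ell$, the interval $[a,b]$ has diagonal corners $a,b$ and anti-diagonal corners $(i,\ell),(k,j)$; it is an inner interval of $\mathcal{P}$ if all its cells belong to $\mathcal{P}$. $I_{\mathcal{P}}$ is generated by the binomials $x_ax_b-x_cx_d$ for inner intervals $[a,b]$ with anti-diagonal corners $c,d$. A horizontal (resp. vertical) edge interval of $\mathcal{P}$ is a set of lattice points on a horizontal (resp. vertical) line, consecutive in that line, such that each pair of consecutive points forms an edge of some cell of $\mathcal{P}$. A zig-zag walk of $\mathcal{P}$ is a sequence of distinct inner intervals $I_1,\dots,I_\ell$ of $\mathcal{P}$ such that, for each $i$, $v_i,z_i$ are the diagonal (resp. anti-diagonal) corners and $u_i,v_{i+1}$ the anti-diagonal (resp. diagonal) corners of $I_i$, and: (Z1) $I_1\cap I_\ell=\{v_1\}=\{v_{\ell+1}\}$ and $I_i\cap I_{i+1}=\{v_{i+1}\}$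 for $i=1,\dots,\ell-1$; (Z2) $v_i$ and $v_{i+1}$ lie on a common edge interval of $\mathcal{P}$ for $i=1,\dots,\ell$; (Z3) for $i\ne j$ there is no inner interval of $\mathcal{P}$ containing both $z_i$ and $z_j$. *)

(* Defs.v *)
From HB Require Import structures.
From mathcomp Require Import all_boot all_order all_algebra.
From mathcomp Require Import finmap.
From mathcomp Require Import mpoly.

Set Implicit Arguments.
Unset Strict Implicit.
Unset Printing Implicit Defensive.

Import GRing.Theory.
Local Open Scope fset_scope.

(* Lattice points of N^2 and cells.  A cell [a, a+(1,1)] is represented by
   its lower-left corner a.  A polyomino is a finite set of cells. *)
Definition point := (nat * nat)%type.

Definition cell_vertices (a : point) : seq point :=
  [:: a; (a.1.+1, a.2); (a.1, a.2.+1); (a.1.+1, a.2.+1)].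

Definition cell_edge (a p q : point) : Prop :=
  let e x y := ((p == x) && (q == y)) || ((p == y) && (q == x)) in
  [\/ e a (a.1.+1, a.2), e a (a.1, a.2.+1),
      e (a.1.+1, a.2) (a.1.+1, a.2.+1) | e (a.1, a.2.+1) (a.1.+1, a.2.+1)].

Definition share_edge (a b : point) : Prop :=
  exists p q, cell_edge a p q /\ cell_edge b p q.

Definition is_polyomino (P : {fset point}) : Prop :=
  P != fset0 /\
  forall a b, a \in P -> b \in P ->
    exists s : seq point,
      [/\ all (fun c => c \in P) s, last a s = b &
          forall i, i < size s -> share_edge (nth a (a :: s) i) (nth a s i)].

(* V(P), as a duplicate-free list (fixes an enumeration of the variables) *)
Definition Vseq (P : {fset point}) : seq point :=
  undup (flatten [seq cell_vertices a | a <- enum_fset P]).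

Definition in_V (P : {fset point}) (v : point) : bool := v \in Vseq P.

Definition interval_ok (a b : point) : bool := (a.1 < b.1) && (a.2 < b.2).

Definition in_interval (a b c : point) : bool :=
  [&& a.1 <= c.1, c.1 <= b.1, a.2 <= c.2 & c.2 <= b.2].

Definition inner_interval (P : {fset point}) (a b : point) : Prop :=
  interval_ok a b /\
  forall c : point, a.1 <= c.1 < b.1 -> a.2 <= c.2 < b.2 -> c \in P.

Definition adc1 (a b : point) : point := (a.1, b.2).
Definition adc2 (a b : point) : point := (b.1, a.2).

(* The polynomial ring S = K[x_v | v in V(P)]; the variable x_v is
   'X_(index of v in Vseq P).  (For v not in V(P) we put 0; this value is
   never used by the generators, whose corners all lie in V(P).) *)
Notation Sring K P := {mpoly K[size (Vseq P)]}.

Definition xvar (K : fieldType) (P : {fset point}) (v : point) : Sring K P :=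
  match insub (index v (Vseq P)) : option 'I_(size (Vseq P)) with
  | Some i => 'X_i
  | None => 0%R
  end.

Definition polyomino_gen (K : fieldType) (P : {fset point}) (f : Sring K P) : Prop :=
  exists a b, inner_interval P a b /\
    (f = xvar K P a * xvar K P b - xvar K P (adc1 a b) * xvar K P (adc2 a b))%R.

Definition in_gen_ideal (R : comNzRingType) (G : R -> Prop) (f : R) : Prop :=
  exists s : seq (R * R),
    (forall i, i < size s -> G (nth (0, 0)%R s i).2) /\
    (f = \sum_(i < size s) (nth (0, 0) s i).1 * (nth (0, 0) s i).2)%R.

Definition polyomino_ideal (K : fieldType) (P : {fset point}) (f : Sring K P) : Prop :=
  in_gen_ideal (@polyomino_gen K P) f.

Definition prime_ideal (R : comNzRingType) (I : R -> Prop) : Prop :=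
  ~ I 1%R /\ forall f g : R, I (f * g)%R -> I f \/ I g.

Definition hor_edge_interval (P : {fset point}) (j lo hi : nat) : Prop :=
  forall x, lo <= x < hi -> exists2 c, c \in P & cell_edge c (x, j) (x.+1, j).

Definition ver_edge_interval (P : {fset point}) (i lo hi : nat) : Prop :=
  forall y, lo <= y < hi -> exists2 c, c \in P & cell_edge c (i, y) (i, y.+1).

Definition on_common_edge_interval (P : {fset point}) (p q : point) : Prop :=
  (exists j lo hi, hor_edge_interval P j lo hi /\
     [/\ p.2 = j, q.2 = j, lo <= p.1 <= hi & lo <= q.1 <= hi]) \/
  (exists i lo hi, ver_edge_interval P i lo hi /\
     [/\ p.1 = i, q.1 = i, lo <= p.2 <= hi & lo <= q.2 <= hi]).

Definition meet_single (I J : point * point) (p : point) : Prop :=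
  forall c : point, (in_interval I.1 I.2 c && in_interval J.1 J.2 c) <-> c = p.

Definition same_pair (x y a b : point) : bool :=
  ((x == a) && (y == b)) || ((x == b) && (y == a)).

(* Zig-zag walk I_1..I_l (0-indexed: Is`_0 .. Is`_(l-1)), each interval
   given by its diagonal corners (a,b); v has indices 0..l with v l = v 0. *)
Definition zigzag_walk (P : {fset point}) (Is : seq (point * point))
    (v z u : nat -> point) : Prop :=
  let l := size Is in
  let I i := nth ((0,0),(0,0)) Is i in
  [/\ 0 < l, uniq Is &
      (forall i, i < l -> inner_interval P (I i).1 (I i).2)] /\
  [/\
      (forall i, i < l ->
         (same_pair (v i) (z i) (I i).1 (I i).2 &&
          same_pair (u i) (v i.+1) (adc1 (I i).1 (I i).2) (adc2 (I i).1 (I i).2))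
      || (same_pair (v i) (z i) (adc1 (I i).1 (I i).2) (adc2 (I i).1 (I i).2) &&
          same_pair (u i) (v i.+1) (I i).1 (I i).2)),
      [/\ meet_single (I 0) (I l.-1) (v 0), v l = v 0 &
          forall i, i.+1 < l -> meet_single (I i) (I i.+1) (v i.+1)],
      (forall i, i < l -> on_common_edge_interval P (v i) (v i.+1)) &
      (forall i j, i < l -> j < l -> i <> j ->
         ~ exists a b, inner_interval P a b /\
             in_interval a b (z i) /\ in_interval a b (z j))].

Definition has_zigzag_walk (P : {fset point}) : Prop :=
  exists Is v z u, zigzag_walk P Is v z u.

(* Main.v *)
Require Import Defs.
From mathcomp Require Import all_boot all_order all_algebra.
From mathcomp Require Import finmap mpoly.
From mathcomp Require Import ring zify.
Import GRing.Theory.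
Local Open Scope ring_scope.

Section S.
Variables (K : fieldType) (P : {fset (nat * nat)}).

Lemma cellV (a w : point) : a \in P -> w \in cell_vertices a -> in_V P w.
Proof.
move=> aP wa; rewrite /in_V /Vseq mem_undup; apply/flatten_mapP; exists a => //.
Qed.

Lemma cornersV a b : inner_interval P a b ->
  [/\ in_V P a, in_V P b, in_V P (adc1 a b) & in_V P (adc2 a b)].
Proof.
case: a b => [a1 a2] [b1 b2] [/andP /= [h1 h2] H]; split.
- apply: (@cellV (a1, a2)); first by apply: H => /=; lia.
  by rewrite inE eqxx.
- apply: (@cellV (b1.-1, b2.-1)); first by apply: H => /=; lia.
  by rewrite /cell_vertices /= !prednK // ?(leq_ltn_trans _ h1) ?(leq_ltn_trans _ h2) // !inE eqxx !orbT.
- apply: (@cellV (a1, b2.-1)); first by apply: H => /=; lia.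
  by rewrite /cell_vertices /adc1 /= !prednK ?(leq_ltn_trans _ h2) // !inE eqxx !orbT.
- apply: (@cellV (b1.-1, a2)); first by apply: H => /=; lia.
  by rewrite /cell_vertices /adc2 /= !prednK ?(leq_ltn_trans _ h1) // !inE eqxx !orbT.
Qed.

Definition ev N (t : point -> {mpoly K[N]}) (p : Sring K P) : {mpoly K[N]} :=
  mmap (@mpolyC N K) (fun k : 'I_(size (Vseq P)) => t (nth (0,0) (Vseq P) k)) p.

Lemma ev_xvar N t w : in_V P w -> @ev N t (xvar K P w) = t w.
Proof.
move=> wV; rewrite /xvar insubT; first by rewrite index_mem.
move=> Hw; rewrite /ev mmapX mmap1U /= nth_index //.
Qed.

Lemma gen_add G (f g : Sring K P) : in_gen_ideal G f -> in_gen_ideal G g -> in_gen_ideal G (f + g).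
Proof.
move=> [s1 [H1 ->]] [s2 [H2 ->]]; exists (s1 ++ s2); split.
  move=> i; rewrite size_cat nth_cat; case: (ltnP i (size s1)) => Hi Hl; first exact: H1.
  by apply: H2; rewrite -(ltn_add2l (size s1)) subnKC.
have E (s0 : seq (Sring K P * Sring K P)) : \sum_(i < size s0) (nth (0,0) s0 i).1 * (nth (0,0) s0 i).2 = \sum_(x <- s0) x.1 * x.2 :> Sring K P.
  by rewrite (big_nth (0,0)) big_mkord.
by rewrite !E big_cat.
Qed.

Lemma gen_mul G (c f : Sring K P) : in_gen_ideal G f -> in_gen_ideal G (c * f).
Proof.
move=> [s [H ->]]; exists (map (fun x => (c * x.1, x.2)) s); split.
  by move=> i; rewrite size_map => Hi; rewrite (nth_map (0,0)) //; apply: H.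
have E (s0 : seq (Sring K P * Sring K P)) : \sum_(i < size s0) (nth (0,0) s0 i).1 * (nth (0,0) s0 i).2 = \sum_(x <- s0) x.1 * x.2 :> Sring K P.
  by rewrite (big_nth (0,0)) big_mkord.
by rewrite !E big_map mulr_sumr; apply: eq_bigr => x _; rewrite mulrA.
Qed.

Lemma gen_0 G : in_gen_ideal G (0 : Sring K P).
Proof. by exists [::]; split => //; rewrite big_ord0. Qed.

Lemma gen_gen G (g : Sring K P) : G g -> in_gen_ideal G g.
Proof.
move=> Hg; exists [:: (1, g)]; split; first by case.
by rewrite big_ord1 /= mul1r.
Qed.

Lemma gen_kill (R : comRingType) (phi : {rmorphism Sring K P -> R}) G f :
  (forall g, G g -> phi g = 0) -> in_gen_ideal G f -> phi f = 0.
Proof.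
move=> HG [s [H ->]]; rewrite rmorph_sum big1 // => i _.
by rewrite rmorphM (HG _ (H i (ltn_ord i))) mulr0.
Qed.


Lemma ev_kill N (t : point -> {mpoly K[N]}) f :
  (forall a b, inner_interval P a b -> t a * t b = t (adc1 a b) * t (adc2 a b)) ->
  polyomino_ideal f -> ev N t f = 0.
Proof.
move=> Ht If; rewrite /ev; pose phi : {rmorphism Sring K P -> {mpoly K[N]}} := mmap (@mpolyC N K) (fun k : 'I_(size (Vseq P)) => t (nth (0,0) (Vseq P) k)).
change (phi f = 0); apply: (@gen_kill _ phi (@polyomino_gen K P) f _ If) => g [a [b [Hab ->]]].
have [Va Vb Vc Vd] := cornersV _ _ Hab.
have := (ev_xvar N t _ Va); have := (ev_xvar N t _ Vb); have := (ev_xvar N t _ Vc); have := (ev_xvar N t _ Vd).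
rewrite /ev => e1 e2 e3 e4.
rewrite rmorphB !rmorphM /phi /= e1 e2 e3 e4.
by rewrite Ht // subrr.
Qed.

Lemma corner_facts (a b p q p' q' : point) : interval_ok a b ->
  same_pair p q a b -> same_pair p' q' (adc1 a b) (adc2 a b) ->
  [/\ [&& in_interval a b p, in_interval a b q, in_interval a b p' & in_interval a b q'],
      [&& p != p', p != q', q != p' & q != q'] & p != q /\ p' != q'].
Proof.
case: a b => [a1 a2] [b1 b2] /andP /= [h1 h2].
rewrite /same_pair /adc1 /adc2 /in_interval /=.
move=> /orP [/andP [/eqP -> /eqP ->] | /andP [/eqP -> /eqP ->]]
       /orP [/andP [/eqP -> /eqP ->] | /andP [/eqP -> /eqP ->]] /=;
  rewrite !xpair_eqE /= !leqnn; split; rewrite ?(ltnW h1) ?(ltnW h2) //=;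
  repeat (apply/andP; split); (try by []); (try split); rewrite ?negb_and;
  apply/orP; (try by left; apply/eqP; lia); (try by right; apply/eqP; lia).
Qed.

Lemma ev_prod N t n (F : 'I_n -> Sring K P) :
  ev N t (\prod_(i < n) F i) = \prod_(i < n) ev N t (F i).
Proof. by rewrite /ev rmorph_prod. Qed.
Lemma ev_B N t (f g : Sring K P) : ev N t (f - g) = ev N t f - ev N t g.
Proof. by rewrite /ev rmorphB. Qed.

Lemma sp_mul (p q a b : point) : same_pair p q a b ->
  xvar K P p * xvar K P q = xvar K P a * xvar K P b.
Proof. by case/orP => /andP [/eqP -> /eqP ->] //; rewrite mulrC. Qed.

Lemma sp_V (p q a b : point) : same_pair p q a b -> in_V P a -> in_V P b -> in_V P p.
Proof. by case/orP => /andP [/eqP -> _]. Qed.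

End S.
Arguments sp_mul {K P p q a b}.
Arguments sp_V {P p q a b}.
Arguments cornersV {P a b}.
Arguments corner_facts {a b p q p' q'}.
Arguments ev_xvar {K P N t w}.
Arguments gen_add {K P G f g}.
Arguments gen_mul {K P G c f}.
Arguments gen_gen {K P G g}.
Arguments gen_0 {K P G}.
Arguments ev {K P}.

Lemma shift_prod (R : comRingType) n (f : nat -> R) : f n = f 0 ->
  \prod_(i < n) f i.+1 = \prod_(i < n) f i.
Proof.
case: n => [|n] H; first by rewrite !big_ord0.
by rewrite big_ord_recr big_ord_recl /= H mulrC.
Qed.

Lemma X_neq0 (K : fieldType) N (j : 'I_N) : ('X_j : {mpoly K[N]}) != 0.
Proof.
apply/eqP => /(congr1 (mcoeff U_(j))); rewrite mcoeffXU mcoeff0 eqxx => /eqP.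
by rewrite oner_eq0.
Qed.

Theorem corollary3p6 (K : fieldType) (P : {fset (nat * nat)}) :
  is_polyomino P -> has_zigzag_walk P ->
  ~ prime_ideal (@polyomino_ideal K P).
Proof.
move=> _ [Is [v [z [u [[l0 uq Hin] [Hpair [Z1a Z1b Z1c] Z2 Z3]]]]]] [_ Hprime].
set l := size Is in l0 Hin Hpair Z1a Z1b Z1c Z2 Z3.
pose I i := nth ((0,0),(0,0))%N Is i.
pose x w := xvar K P w.
have gen_i i : (i < l)%N -> polyomino_ideal (x (v i) * x (z i) - x (u i) * x (v i.+1)).
  move=> il; have Hi := Hin i il.
  case/orP: (Hpair i il) => /andP [h1 h2].
    rewrite /x (sp_mul h1) (sp_mul h2); apply: gen_gen.
    by exists (I i).1, (I i).2.
  rewrite /x (sp_mul h1) (sp_mul h2) -opprB -mulN1r; apply: gen_mul; apply: gen_gen.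
  by exists (I i).1, (I i).2.
have facts i : (i < l)%N -> [/\ in_V P (v i), in_interval (I i).1 (I i).2 (z i),
     in_interval (I i).1 (I i).2 (u i) & z i != u i].
  move=> il; have Hi := Hin i il; have [Va Vb Vc Vd] := cornersV Hi.
  case/orP: (Hpair i il) => /andP [h1 h2].
    have [/and4P [_ ->  -> _] /and4P [_ _ -> _] _] := corner_facts Hi.1 h1 h2.
    by rewrite (sp_V h1).
  have [/and4P [-> _ _ ->] /and4P [_ zu _ _] _] := corner_facts Hi.1 h2 h1.
  by rewrite (sp_V h1) // eq_sym.
have tel k : (k <= l)%N -> polyomino_ideal (\prod_(i < k) (x (v i) * x (z i)) -
                                        \prod_(i < k) (x (u i) * x (v i.+1))).
  elim: k => [|k IH] kl; first by rewrite !big_ord0 subrr; apply: gen_0.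
  rewrite !big_ord_recr /=.
  set A := \prod_(i < k) _; set B := \prod_(i < k) _.
  have -> : A * (x (v k) * x (z k)) - B * (x (u k) * x (v k.+1)) =
     (x (v k) * x (z k)) * (A - B) + B * (x (v k) * x (z k) - x (u k) * x (v k.+1)) by ring.
  apply: gen_add; apply: gen_mul; [apply: IH | apply: gen_i]; exact: (leq_trans _ kl).
have := tel l (leqnn l); rewrite !big_split /=.
rewrite (@shift_prod _ l (fun i => x (v i))) /=; last by rewrite Z1b.
rewrite [X in _ - X]mulrC -mulrBr => /Hprime [IV | IM].
- have := @ev_kill K P 0 (fun _ => 1) _ (fun a b _ => erefl) IV.
  rewrite ev_prod big1 => [/eqP|i _]; first by rewrite oner_eq0.
  by case: (facts i (ltn_ord i)) => Vi _ _ _; rewrite /x ev_xvar.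
- pose t w : {mpoly K[l]} := if [pick j : 'I_l | z j == w] is Some j then 'X_j else 0.
  have tz p q a b : inner_interval P a b -> in_interval a b p -> in_interval a b q ->
      p != q -> t p * t q = 0.
    move=> Hab hp hq pq; rewrite /t.
    case: pickP => [i /eqP zi|_]; last by rewrite mul0r.
    case: pickP => [j /eqP zj|_]; last by rewrite mulr0.
    exfalso; apply: (Z3 i j (ltn_ord i) (ltn_ord j)).
      by move=> ij; move: pq; rewrite -zi -zj ij eqxx.
    by exists a, b; rewrite zi zj.
  have Ht a b : inner_interval P a b -> t a * t b = t (adc1 a b) * t (adc2 a b).
    move=> Hab.
    have sp : same_pair a b a b by rewrite /same_pair !eqxx.
    have sp' : same_pair (adc1 a b) (adc2 a b) (adc1 a b) (adc2 a b) by rewrite /same_pair !eqxx.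
    have [/and4P [ha hb hc hd] _ [ab cd]] := corner_facts Hab.1 sp sp'.
    by rewrite (tz _ _ _ _ Hab ha hb ab) (tz _ _ _ _ Hab hc hd cd).
  have := @ev_kill K P l t _ Ht IM.
  rewrite ev_B !ev_prod.
  have -> : \prod_(i < l) ev l t (x (u i)) = 0.
    rewrite (bigD1 (Ordinal l0)) //= (_ : ev l t (x (u 0)) = 0) ?mul0r //.
    have [_ z0 u0 zu] := facts 0 l0.
    rewrite /x ev_xvar; last first.
      have Hi := Hin 0 l0; have [Va Vb Vc Vd] := cornersV Hi.
      case/orP: (Hpair 0 l0) => /andP [h1 h2].
        by case/orP: h2 => /andP [/eqP -> _].
      by case/orP: h2 => /andP [/eqP -> _].
    rewrite /t; case: pickP => [j /eqP zj|//]; exfalso.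
    have [j0|jn0] := eqVneq (j : nat) 0.
      by move: zu; rewrite -zj j0 eqxx.
    apply: (Z3 0 j l0 (ltn_ord j)); first by move=> e; rewrite -e eqxx in jn0.
    by exists (I 0).1, (I 0).2; split; [exact: Hin | rewrite zj].
  rewrite subr0 => /eqP; apply/negP; apply/prodf_neq0 => i _.
  have [_ zi _ _] := facts i (ltn_ord i).
  rewrite /x ev_xvar; last first.
    have Hi := Hin i (ltn_ord i); have [Va Vb Vc Vd] := cornersV Hi.
    case/orP: (Hpair i (ltn_ord i)) => /andP [h1 h2].
      by case/orP: h1 => /andP [_ /eqP ->].
    by case/orP: h1 => /andP [_ /eqP ->].
  rewrite /t; case: pickP => [j _|/(_ i)]; first exact: X_neq0.
  by rewrite eqxx.
Qed.
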